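(* Let $\gamma>0$, $\Gamma_\infty>0$, $R\in\mathbb{N}$, and for $i\in\mathcal{N}=\{1,\dots,N\}$ let $d_i\in\mathbb{N}$, $\delta_i>0$, $\tau^i_{\max}>0$ satisfy \[ \delta_i+\frac{d_i}{R}<\frac{\gamma}{2\Gamma_\infty}\qquad\text{for all } i\in\mathcal{N}. \] Set $\xi_i:=2\Gamma_\infty d_i/R$, $\eta_i:=\gamma-2\Gamma_\infty\delta_i$ and \[ \tilde\omega:=\min_{i\in\mathcal{N}}\left(\eta_i-\frac{W(\xi_i\tau^i_{\max}e^{\eta_i\tau^i_{\max}})}{\tau^i_{\max}}\right),\qquad \kappa(\omega):=\max_{i\in\mathcal{N}}\left(\delta_i+\frac{d_ie^{\omega\tau^i_{\max}}}{R}\right). \] Then $\tilde\omega>0$, and for $\omega\in\mathbb{R}$, the condition $0<\omega\le\gamma-2\Gamma_\infty\kappa(\omega)$ holds if and only if $0<\omega\le\tilde\omega$.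
   Context: $W$ denotes the Lambert $W$-function on $[0,\infty)$: $W(y)$ is the unique solution $x\ge0$ of $xe^x=y$. (In the paper, $d_i$ are node degrees of a connected graph, $\gamma\le\lambda_2(L)$ and $\Gamma_\infty=\sup_{t\ge0}\|e^{\gamma t}(e^{-Lt}-\mathbf{1}\bar{\mathbf{1}})\|_\infty$, but the statement only uses positivity of these quantities.) *)

(* Defs.v *)
From Stdlib Require Import Reals Lra Lia ClassicalEpsilon.
Open Scope R_scope.

(* Lambert W on [0,oo): W y is the unique x >= 0 with x * exp x = y
   (chosen by Hilbert's epsilon; the value for y < 0 is irrelevant). *)
Definition LambertW (y : R) : R :=
  epsilon (inhabits 0%R) (fun x => 0 <= x /\ x * exp x = y).

Fixpoint min_upto (f : nat -> R) (n : nat) : R :=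
  match n with
  | O => f O
  | S m => Rmin (f (S m)) (min_upto f m)
  end.

Fixpoint max_upto (f : nat -> R) (n : nat) : R :=
  match n with
  | O => f O
  | S m => Rmax (f (S m)) (max_upto f m)
  end.

(* Main.v *)
Require Import Defs.
From Stdlib Require Import Reals.
From Stdlib Require Import Lra Lia Psatz ClassicalEpsilon.
Open Scope R_scope.

Lemma W_spec (y : R) : 0 <= y -> 0 <= LambertW y /\ LambertW y * exp (LambertW y) = y.
Proof.
  intro hy. unfold LambertW. apply epsilon_spec.
  destruct (Req_dec y 0) as [e|ne].
  - exists 0. subst. split; [lra|ring].
  - assert (c : continuity (fun x => x * exp x - y)).
    { apply continuity_minus; [apply continuity_mult|apply continuity_const; intros ??; reflexivity].
      apply derivable_continuous, derivable_id.
      apply derivable_continuous, derivable_exp. }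
    destruct (IVT _ 0 y c) as [z [hz ez]].
    + lra.
    + rewrite Rmult_0_l; lra.
    + pose proof (exp_ineq1_le y). nra.
    + exists z. split; lra.
Qed.

Lemma min_le (f : nat -> R) n c : c <= min_upto f n <-> forall i, (i <= n)%nat -> c <= f i.
Proof.
  induction n; simpl.
  - split; intros. replace i with 0%nat by lia. auto. apply H; lia.
  - unfold Rmin; destruct (Rle_dec _ _); split; intros.
    + destruct (Nat.eq_dec i (S n)). subst; auto.
      apply IHn; [lra|lia].
    + apply H; lia.
    + destruct (Nat.eq_dec i (S n)). subst; lra.
      apply IHn; [auto|lia].
    + apply IHn. intros; apply H; lia.
Qed.

Lemma min_lt (f : nat -> R) n c : (forall i, (i <= n)%nat -> c < f i) -> c < min_upto f n.
Proof.
  induction n; simpl; intros H.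
  - apply H; lia.
  - unfold Rmin; destruct (Rle_dec _ _). apply H; lia. apply IHn. intros; apply H; lia.
Qed.

Lemma max_le (f : nat -> R) n c : max_upto f n <= c <-> forall i, (i <= n)%nat -> f i <= c.
Proof.
  induction n; simpl.
  - split; intros. replace i with 0%nat by lia. auto. apply H; lia.
  - unfold Rmax; destruct (Rle_dec _ _); split; intros.
    + destruct (Nat.eq_dec i (S n)). subst; lra.
      apply IHn; [auto|lia].
    + apply IHn. intros; apply H; lia.
    + destruct (Nat.eq_dec i (S n)). subst; auto.
      apply IHn; [lra|lia].
    + apply H; lia.
Qed.

Lemma single (xi eta tau : R) : 0 <= xi -> 0 < tau ->
  let w := eta - LambertW (xi * tau * exp (eta * tau)) / tau in
  (forall om, om + xi * exp (om * tau) <= eta <-> om <= w) /\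
  (xi < eta -> 0 < w).
Proof.
  intros hxi ht w.
  assert (hy : 0 <= xi * tau * exp (eta * tau)).
  { pose proof (exp_pos (eta*tau)). apply Rmult_le_pos; [apply Rmult_le_pos|]; lra. }
  destruct (W_spec _ hy) as [w0 we].
  set (L := LambertW _) in *.
  assert (gw : w + xi * exp (w * tau) = eta).
  { unfold w. replace ((eta - L / tau) * tau) with (eta * tau + - L) by (field; lra).
    rewrite exp_plus, exp_Ropp.
    assert (xi * (exp (eta * tau) * / exp L) = L / tau).
    { pose proof (exp_pos L).
      replace (xi * (exp (eta * tau) * / exp L)) with ((xi*tau*exp(eta*tau)) / (tau * exp L)) by (field; split; lra).
      rewrite <- we. field. split; lra. }
    rewrite H. ring. }
  assert (mono : forall a b, a < b -> a + xi * exp (a * tau) < b + xi * exp (b * tau)).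
  { intros a b hab. assert (exp (a*tau) < exp (b*tau)) by (apply exp_increasing; nra).
    nra. }
  split.
  - intros om; split; intros h.
    + destruct (Rle_or_lt om w) as [|hl]; auto. specialize (mono _ _ hl). lra.
    + destruct h as [hl|e]. specialize (mono _ _ hl). lra. rewrite e. lra.
  - intros hx. destruct (Rle_or_lt w 0) as [hl|]; auto.
    destruct hl as [hl|e]. specialize (mono _ _ hl). rewrite Rmult_0_l, exp_0 in mono. lra.
    rewrite e in gw. rewrite Rmult_0_l, exp_0 in gw. lra.
Qed.

(* Agents are indexed by i = 0, ..., N-1 (i.e. i < N). *)
Theorem lemma5 (gamma Gamma_inf : R) (Rn N : nat)
  (d : nat -> nat) (delta tau_max : nat -> R)
  (hgamma : 0 < gamma) (hGamma : 0 < Gamma_inf)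
  (hR : (0 < Rn)%nat) (hN : (0 < N)%nat)
  (hdelta : forall i, (i < N)%nat -> 0 < delta i)
  (htau : forall i, (i < N)%nat -> 0 < tau_max i)
  (hcond : forall i, (i < N)%nat ->
     delta i + INR (d i) / INR Rn < gamma / (2 * Gamma_inf)) :
  let xi := fun i => 2 * Gamma_inf * INR (d i) / INR Rn in
  let eta := fun i => gamma - 2 * Gamma_inf * delta i in
  let omega_t := min_upto (fun i =>
        eta i - LambertW (xi i * tau_max i * exp (eta i * tau_max i)) / tau_max i)
        (N - 1) in
  let kappa := fun omega : R => max_upto (fun i =>
        delta i + INR (d i) * exp (omega * tau_max i) / INR Rn) (N - 1) in
  0 < omega_t /\
  forall omega : R,
    (0 < omega /\ omega <= gamma - 2 * Gamma_inf * kappa omega) <->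
    (0 < omega /\ omega <= omega_t).
Proof.
  intros xi eta omega_t kappa.
  assert (hRp : 0 < INR Rn) by (apply lt_0_INR; lia).
  assert (hxi : forall i, 0 <= xi i).
  { intro i. unfold xi. pose proof (pos_INR (d i)).
    apply Rmult_le_pos; [nra|]. left; apply Rinv_0_lt_compat; lra. }
  assert (S := fun i (hi : (i <= N - 1)%nat) =>
             single (xi i) (eta i) (tau_max i) (hxi i) (htau i ltac:(lia))).
  split.
  - apply min_lt. intros i hi. apply (proj2 (S i hi)).
    specialize (hcond i ltac:(lia)). unfold xi, eta.
    apply (Rmult_lt_compat_l (2 * Gamma_inf)) in hcond; [|lra].
    replace (2 * Gamma_inf * (gamma / (2 * Gamma_inf))) with gamma in hcond by (field; lra).
    replace (2 * Gamma_inf * INR (d i) / INR Rn) with (2 * Gamma_inf * (INR (d i) / INR Rn))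
      by (field; lra). lra.
  - intros om. apply and_iff_compat_l.
    unfold omega_t. rewrite min_le.
    assert (E : om <= gamma - 2 * Gamma_inf * kappa om <-> kappa om <= (gamma - om) / (2 * Gamma_inf)).
    { split; intro h.
      - apply (Rmult_le_reg_l (2 * Gamma_inf)); [lra|].
        replace (2 * Gamma_inf * ((gamma - om) / (2 * Gamma_inf))) with (gamma - om) by (field; lra). lra.
      - apply (Rmult_le_compat_l (2 * Gamma_inf)) in h; [|lra].
        replace (2 * Gamma_inf * ((gamma - om) / (2 * Gamma_inf))) with (gamma - om) in h by (field; lra). lra. }
    rewrite E. unfold kappa. rewrite max_le.
    split; intros H i hi; specialize (H i hi).
    + apply (proj1 (S i hi) om).
      apply (Rmult_le_compat_l (2 * Gamma_inf)) in H; [|lra].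
      replace (2 * Gamma_inf * ((gamma - om) / (2 * Gamma_inf))) with (gamma - om) in H by (field; lra).
      unfold xi, eta.
      replace (2 * Gamma_inf * (delta i + INR (d i) * exp (om * tau_max i) / INR Rn))
        with (2 * Gamma_inf * delta i + 2 * Gamma_inf * INR (d i) / INR Rn * exp (om * tau_max i)) in H
        by (field; lra). lra.
    + apply (proj2 (proj1 (S i hi) om)) in H.
      apply (Rmult_le_reg_l (2 * Gamma_inf)); [lra|].
      replace (2 * Gamma_inf * ((gamma - om) / (2 * Gamma_inf))) with (gamma - om) by (field; lra).
      unfold xi, eta in H.
      replace (2 * Gamma_inf * (delta i + INR (d i) * exp (om * tau_max i) / INR Rn))
        with (2 * Gamma_inf * delta i + 2 * Gamma_inf * INR (d i) / INR Rn * exp (om * tau_max i))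
        by (field; lra). lra.
Qed.
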